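(* Let $\phi\colon P(\mathbb{R})\to P(\mathbb{R})$ be a surjective isometry with respect to the Kuiper distance. Then there exists a bijection $f\colon\mathbb{R}\to\mathbb{R}$ such that $$\phi(\mu)(\{f(x)\})=\mu(\{x\})\qquad(\mu\in P(\mathbb{R}),\ x\in\mathbb{R}).$$
   Context: $P(\mathbb{R})$ is the set of Borel probability measures on $\mathbb{R}$, with the Kuiper distance $d_{Ku}(\mu,\nu)=\sup\{|\mu(I)-\nu(I)| : I\text{ a non-degenerate interval of }\mathbb{R}\}$. *)

(* Defs.v *)
From HB Require Import structures.
From mathcomp Require Import all_boot all_order all_algebra.
From mathcomp Require Import all_classical all_reals all_analysis.
Set Implicit Arguments. Unset Strict Implicit. Unset Printing Implicit Defensive.
Import Order.TTheory GRing.Theory Num.Theory.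
Local Open Scope classical_set_scope.
Local Open Scope ring_scope.

(* P(R): Borel probability measures on R (R carries its canonical Borel
   sigma-algebra in mathcomp-analysis). *)
Definition PR (R : realType) := probability R R.

Definition nondeg_itv (R : realType) (I : interval R) : Prop :=
  exists x y : R, x < y /\ x \in I /\ y \in I.

(* Kuiper distance: sup over non-degenerate intervals I of |mu(I) - nu(I)|.
   Probability measures take finite values, so [fine] is harmless. *)
Definition kuiper (R : realType) (mu nu : PR R) : R :=
  sup [set `|fine (mu [set` I]) - fine (nu [set` I])| |
       I in [set I : interval R | nondeg_itv I]].

(* Main.v *)
Require Import Defs.
From HB Require Import structures.
From mathcomp Require Import all_boot all_order all_algebra.
From mathcomp Require Import all_classical all_reals all_analysis.
From mathcomp Require Import lra.
Set Implicit Arguments. Unset Strict Implicit. Unset Printing Implicit Defensive.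
Import Order.TTheory GRing.Theory Num.Theory.
Local Open Scope classical_set_scope.
Local Open Scope ring_scope.

Section Aux.
Variable R : realType.
Implicit Types (mu nu : PR R) (A B : set R).

Definition mP mu A : R := fine (mu A).

Lemma mPE mu A : measurable A -> mu A = (mP mu A)%:E.
Proof. by move=> mA; rewrite /mP fineK // fin_num_measure. Qed.

Lemma mP_ge0 mu A : measurable A -> 0 <= mP mu A.
Proof. by move=> mA; rewrite -lee_fin -mPE. Qed.

Lemma mP_le1 mu A : measurable A -> mP mu A <= 1.
Proof. by move=> mA; rewrite -lee_fin -mPE // probability_le1. Qed.

Lemma mP_T mu : mP mu setT = 1.
Proof. by rewrite /mP probability_setT. Qed.

Lemma mP_C mu A : measurable A -> mP mu (~` A) = 1 - mP mu A.
Proof.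
move=> mA; apply/EFin_inj; rewrite -mPE; last exact: measurableC.
by rewrite probability_setC // mPE.
Qed.

Lemma mP_le mu A B : measurable A -> measurable B -> A `<=` B -> mP mu A <= mP mu B.
Proof.
move=> mA mB AB; rewrite -lee_fin -!mPE //; by apply: le_measure => //; rewrite inE.
Qed.

Lemma mP_U mu A B : measurable A -> measurable B -> mP mu (A `|` B) <= mP mu A + mP mu B.
Proof.
move=> mA mB; rewrite -lee_fin EFinD -!mPE //; last exact: measurableU.
exact: measureU2.
Qed.


Lemma nondeg_T : nondeg_itv (`]-oo, +oo[ : interval R).
Proof. by exists 0, 1; rewrite !in_itv /= ltr01. Qed.

Lemma absdiff_le1 mu nu A : measurable A -> `|mP mu A - mP nu A| <= 1.
Proof.
move=> mA; have := mP_ge0 mu mA; have := mP_le1 mu mA.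
have := mP_ge0 nu mA; have := mP_le1 nu mA.
rewrite ler_norml; move=> *; apply/andP; split; lra.
Qed.

Lemma K_ub mu nu (b : R) :
  (forall I : interval R, nondeg_itv I -> `|mP mu [set` I] - mP nu [set` I]| <= b) ->
  kuiper mu nu <= b.
Proof.
move=> H; rewrite /kuiper; apply: ge_sup.
  by exists `|mP mu [set` `]-oo, +oo[] - mP nu [set` `]-oo, +oo[]|, `]-oo, +oo[ => //; exact: nondeg_T.
by move=> y [I HI <-]; exact: H.
Qed.

Lemma K_lb mu nu (I : interval R) : nondeg_itv I ->
  `|mP mu [set` I] - mP nu [set` I]| <= kuiper mu nu.
Proof.
move=> HI; rewrite /kuiper; apply: sup_upper_bound; last by exists I.
split; first by exists `|mP mu [set` I] - mP nu [set` I]|, I.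
by exists 1 => y [J _ <-]; apply: absdiff_le1; exact: measurable_itv.
Qed.

Lemma arch_inv (e : R) : 0 < e -> exists n : nat, (n.+1%:R)^-1 < e.
Proof.
move=> e0; exists (Num.truncn e^-1).
by rewrite invf_plt ?posrE // truncnS_gt.
Qed.


Lemma dirac_in mu c A : mP mu [set c] = 1 -> measurable A -> A c -> mP mu A = 1.
Proof.
move=> H1 mA Ac; apply/le_anti; rewrite mP_le1 //= -{1}H1.
apply: mP_le => //; by [exact: measurable_set1 | move=> x ->].
Qed.

Lemma dirac_out mu c A : mP mu [set c] = 1 -> measurable A -> ~ A c -> mP mu A = 0.
Proof.
move=> H1 mA Ac; apply/le_anti; rewrite mP_ge0 // andbT.
have -> : 0 = 1 - mP mu [set c] by rewrite H1 subrr.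
rewrite -mP_C; last exact: measurable_set1.
apply: mP_le => //; first by apply: measurableC; exact: measurable_set1.
by move=> x Ax xc; apply: Ac; rewrite -xc.
Qed.

Lemma in_le nu c A : measurable A -> A c -> mP nu [set c] <= mP nu A.
Proof. by move=> mA Ac; apply: mP_le => //; by [exact: measurable_set1 | move=> x ->]. Qed.

Lemma out_le nu c A : measurable A -> ~ A c -> mP nu A <= 1 - mP nu [set c].
Proof.
move=> mA Ac; rewrite -mP_C; last exact: measurable_set1.
apply: mP_le => //; first by apply: measurableC; exact: measurable_set1.
by move=> x Ax xc; apply: Ac; rewrite -xc.
Qed.

Lemma bigcap_shrink (c : R) :
  \bigcap_n [set` `[c, c + (n.+1%:R)^-1]] = [set c].
Proof.
apply/seteqP; split; last first.
  by move=> x /= -> n _ /=; rewrite in_itv /= lexx /= lerDl invr_ge0.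
move=> x /= H; apply/le_anti/andP; split; last first.
  by have := H 0%N I; rewrite /= in_itv /= => /andP[].
rewrite leNgt; apply/negP => cx.
have [n Hn] : exists n : nat, (n.+1%:R)^-1 < x - c by apply: arch_inv; rewrite subr_gt0.
have := H n I; rewrite /= in_itv /= => /andP[_].
by rewrite -lerBlDl leNgt Hn.
Qed.


Lemma K_dirac mu nu c : mP mu [set c] = 1 -> kuiper mu nu = 1 - mP nu [set c].
Proof.
move=> H1; apply/le_anti/andP; split.
  apply: K_ub => I _; have mI := measurable_itv I.
  have h0 := mP_ge0 nu mI; have h1 := mP_le1 nu mI.
  case: (boolP (c \in I)) => cI.
    rewrite (dirac_in H1 mI cI); have := in_le nu mI cI.
    by rewrite ler_norml => ?; apply/andP; split; lra.
  have cI' : ~ [set` I] c by move=> /= h; rewrite h in cI.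
  rewrite (dirac_out H1 mI cI'); have := out_le nu mI cI'.
  by rewrite ler_norml => ?; apply/andP; split; lra.
set k := kuiper mu nu.
pose F n := [set` `[c, c + (n.+1%:R)^-1]].
have mF n : measurable (F n) by exact: measurable_itv.
have HF n : ((1 - k)%:E <= nu (F n))%E.
  have cF : F n c by rewrite /F /= in_itv /= lexx /= lerDl invr_ge0.
  have nd : nondeg_itv (`[c, c + (n.+1%:R)^-1]).
    exists c, (c + (n.+1%:R)^-1); rewrite !in_itv /= lexx /= lerDl invr_ge0 /=.
    split; first by rewrite ltrDl invr_gt0 ltr0n.
    by split; rewrite ?ler0n ?lexx.
  have := K_lb mu nu nd; rewrite -/k -/(F n) (dirac_in H1 (mF n) cF).
  rewrite mPE // lee_fin => /(le_trans (ler_norm _)) => ?; lra.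
have cvgF : (nu \o F) x @[x --> \oo] --> nu (\bigcap_n F n).
  apply: nonincreasing_cvg_mu => //.
  - by apply: (le_lt_trans (probability_le1 nu (mF 0%N))); rewrite ltry.
  - exact: (bigcapT_measurable mF).
  - move=> n m nm; apply/subsetPset => x; rewrite /F /= !in_itv /= => /andP[-> xb].
    apply: le_trans xb _; rewrite lerD2l lef_pV2 ?posrE ?ltr0n //.
    by rewrite ler_nat.
rewrite /F bigcap_shrink -/F in cvgF.
have : ((1 - k)%:E <= lim ((nu \o F) x @[x --> \oo]))%E.
  apply: lime_ge; first exact: cvgP cvgF.
  by apply: nearW => n; exact: HF.
rewrite (cvg_lim _ cvgF) // mPE; last exact: measurable_set1.
rewrite lee_fin => ?; lra.
Qed.


Lemma dirac_P mu c : mP mu [set c] = 1 ->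
  forall nu rho, kuiper mu nu < 1 -> kuiper mu rho < 1 -> kuiper nu rho < 1.
Proof.
move=> H1 nu rho; rewrite !(K_dirac _ H1) => hn hr.
set m := Num.max (1 - mP nu [set c]) (1 - mP rho [set c]).
have m1 : 1 - mP nu [set c] <= m by rewrite le_max lexx.
have m2 : 1 - mP rho [set c] <= m by rewrite le_max lexx orbT.
have m3 : m < 1 by rewrite gt_max; apply/andP; split; lra.
apply: (le_lt_trans _ m3); apply: K_ub => I _; have mI := measurable_itv I.
have h0 := mP_ge0 nu mI; have h1 := mP_le1 nu mI.
have h2 := mP_ge0 rho mI; have h3 := mP_le1 rho mI.
rewrite ler_norml.
case: (boolP (c \in I)) => cI.
  have := in_le nu mI cI; have := in_le rho mI cI.
  by move=> ? ?; apply/andP; split; lra.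
have cI' : ~ [set` I] c by move=> /= h; rewrite h in cI.
have := out_le nu mI cI'; have := out_le rho mI cI'.
by move=> ? ?; apply/andP; split; lra.
Qed.

End Aux.
Definition gmin (R : realType) (t : R) (x : R) : R := Order.min x t.
Definition gmax (R : realType) (t : R) (x : R) : R := Order.max x t.

Lemma gmin_mf (R : realType) (t : R) : measurable_fun setT (gmin t).
Proof. by apply: measurable_realfun.measurable_minr; [exact: measurable_id | exact: measurable_cst]. Qed.
Lemma gmax_mf (R : realType) (t : R) : measurable_fun setT (gmax t).
Proof. by apply: measurable_realfun.measurable_maxr; [exact: measurable_id | exact: measurable_cst]. Qed.

HB.instance Definition _ (R : realType) (t : R) :=
  isMeasurableFun.Build _ _ R R (gmin t) (@gmin_mf R t).
HB.instance Definition _ (R : realType) (t : R) :=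
  isMeasurableFun.Build _ _ R R (gmax t) (@gmax_mf R t).

Section Push.
Variable R : realType.
Implicit Types (mu nu : PR R) (A B : set R).

Definition pmin mu (t : R) : PR R := distribution mu (gmin t).
Definition pmax mu (t : R) : PR R := distribution mu (gmax t).


Lemma near_bound mu A B L : measurable A -> measurable B -> measurable L ->
  A `&` L `<=` B -> B `&` L `<=` A -> `|mP mu A - mP mu B| <= 1 - mP mu L.
Proof.
move=> mA mB mL AB BA.
have mCL : measurable (~` L) by exact: measurableC.
have key X Y : measurable X -> measurable Y -> X `&` L `<=` Y ->
    mP mu X <= mP mu Y + (1 - mP mu L).
  move=> mX mY XY; rewrite -mP_C //.
  have mU : measurable (Y `|` ~` L) by exact: measurableU.
  have h : mP mu X <= mP mu (Y `|` ~` L).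
    apply: mP_le => // x Xx; case: (pselect (L x)) => Lx; [left; exact: XY | by right].
  exact: (le_trans h (mP_U mu mY mCL)).
have := key _ _ mA mB AB; have := key _ _ mB mA BA.
by rewrite ler_norml => ? ?; apply/andP; split; lra.
Qed.

Lemma K_pmin mu t : kuiper mu (pmin mu t) <= 1 - mP mu [set` `]-oo, t[].
Proof.
apply: K_ub => I _.
have -> : mP (pmin mu t) [set` I] = mP mu (gmin t @^-1` [set` I]) by [].
apply: near_bound.
- exact: measurable_itv.
- by apply: measurable_funPTI; exact: measurable_itv.
- exact: measurable_itv.
- move=> x [Ix]; rewrite /= in_itv /= => xt.
  by rewrite /gmin min_l // ltW.
- move=> x [Ix]; rewrite /= in_itv /= => xt.
  by move: Ix; rewrite /= /gmin min_l // ltW.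
Qed.

Lemma K_pmax mu t : kuiper mu (pmax mu t) <= 1 - mP mu [set` `]t, +oo[].
Proof.
apply: K_ub => I _.
have -> : mP (pmax mu t) [set` I] = mP mu (gmax t @^-1` [set` I]) by [].
apply: near_bound.
- exact: measurable_itv.
- by apply: measurable_funPTI; exact: measurable_itv.
- exact: measurable_itv.
- move=> x [Ix]; rewrite /= in_itv /= andbT => xt.
  by rewrite /gmax max_l // ltW.
- move=> x [Ix]; rewrite /= in_itv /= andbT => xt.
  by move: Ix; rewrite /= /gmax max_l // ltW.
Qed.


Definition Pprop mu := forall nu rho : PR R,
  kuiper mu nu < 1 -> kuiper mu rho < 1 -> kuiper nu rho < 1.

Lemma mP0 mu : mP mu set0 = 0.
Proof. by rewrite /mP measure0. Qed.

Lemma split_zero mu : Pprop mu -> forall t t' : R, t < t' ->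
  mP mu [set` `]-oo, t[] = 0 \/ mP mu [set` `]t', +oo[] = 0.
Proof.
move=> HP t t' tt'.
case: (eqVneq (mP mu [set` `]-oo, t[]) 0) => h1; first by left.
case: (eqVneq (mP mu [set` `]t', +oo[]) 0) => h2; first by right.
exfalso.
have p1 : 0 < mP mu [set` `]-oo, t[] by rewrite lt0r h1 mP_ge0 //; exact: measurable_itv.
have p2 : 0 < mP mu [set` `]t', +oo[] by rewrite lt0r h2 mP_ge0 //; exact: measurable_itv.
have k1 : kuiper mu (pmin mu t) < 1 by apply: (le_lt_trans (K_pmin mu t)); lra.
have k2 : kuiper mu (pmax mu t') < 1 by apply: (le_lt_trans (K_pmax mu t')); lra.
have := HP _ _ k1 k2.
have nd : nondeg_itv (`]-oo, t] : interval R).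
  by exists (t - 1), t; rewrite !in_itv /= lexx gtrBl ltr01 lerBlDr lerDl ler01.
have := K_lb (pmin mu t) (pmax mu t') nd.
have -> : mP (pmin mu t) [set` `]-oo, t]] = 1.
  have -> : mP (pmin mu t) [set` `]-oo, t]] = mP mu (gmin t @^-1` [set` `]-oo, t]]) by [].
  have -> : gmin t @^-1` [set` `]-oo, t]] = setT.
    by apply/seteqP; split=> x //= _; rewrite in_itv /= /gmin ge_min lexx orbT.
  exact: mP_T.
have -> : mP (pmax mu t') [set` `]-oo, t]] = 0.
  have -> : mP (pmax mu t') [set` `]-oo, t]] = mP mu (gmax t' @^-1` [set` `]-oo, t]]) by [].
  have -> : gmax t' @^-1` [set` `]-oo, t]] = set0.
    apply/seteqP; split=> x //=; rewrite in_itv /= /gmax ge_max => /andP[_].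
    by rewrite leNgt tt'.
  exact: mP0.
rewrite subr0 normr1 => a b; lra.
Qed.

Lemma null_union mu A (F : nat -> set R) : measurable A ->
  (forall n, measurable (F n)) -> (forall n, mP mu (F n) = 0) ->
  A `<=` \bigcup_n F n -> mP mu A = 0.
Proof.
move=> mA mF F0 AF.
have : mu.-negligible (\bigcup_n F n).
  apply: negligible_bigcup => n; apply/negligibleP => //.
  by have := mPE mu (mF n); rewrite F0 => h; exact: h.
move=> /(negligibleS AF) /negligibleP h; rewrite /mP h //.
Qed.


Lemma P_D mu : Pprop mu -> exists c, mP mu [set c] = 1.
Proof.
move=> HP.
have mI (I : interval R) : measurable [set` I] by exact: measurable_itv.
have T0 : mP mu setT = 1 by exact: mP_T.
have [t0 Ht0] : exists t0, 0 < mP mu [set` `]-oo, t0[].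
  apply/not_existsP => H.
  have : mP mu setT = 0.
    apply: (@null_union mu setT (fun n => [set` `]-oo, (n.+1%:R : R)[])) => //.
      move=> n; apply/eqP; have := H n.+1%:R; rewrite lt0r mP_ge0 // andbT.
      by move/negP; rewrite negbK.
    move=> x _; exists (Num.truncn x) => //=; rewrite in_itv /=.
    exact: truncnS_gt.
  by rewrite T0 => /eqP; rewrite oner_eq0.
have [t1 Ht1] : exists t1, 0 < mP mu [set` `]t1, +oo[].
  apply/not_existsP => H.
  have : mP mu setT = 0.
    apply: (@null_union mu setT (fun n => [set` `]- (n.+1%:R : R), +oo[])) => //.
      move=> n; apply/eqP; have := H (- n.+1%:R); rewrite lt0r mP_ge0 // andbT.
      by move/negP; rewrite negbK.
    move=> x _; exists (Num.truncn (- x)) => //=; rewrite in_itv /= andbT.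
    by rewrite ltrNl; exact: truncnS_gt.
  by rewrite T0 => /eqP; rewrite oner_eq0.
pose L := [set t : R | mP mu [set` `]-oo, t[] = 0].
have L1 : L (t1 - 1).
  have h0 : t1 - 1 < t1 by lra.
  have [//|h] := split_zero HP h0.
  by move: Ht1; rewrite h ltxx.
have Lub : ubound L t0.
  move=> t Lt; rewrite leNgt; apply/negP => t0t.
  have : mP mu [set` `]-oo, t0[] <= mP mu [set` `]-oo, t[].
    apply: mP_le => // x; rewrite /= !in_itv /= => xt0; exact: lt_trans xt0 t0t.
  by rewrite Lt => h; move: Ht0; rewrite ltNge h.
have supL : has_sup L by split; [exists (t1 - 1) | exists t0].
set c := sup L.
have left0 : mP mu [set` `]-oo, c[] = 0.
  apply: (@null_union mu _ (fun n => [set` `]-oo, c - (n.+1%:R)^-1[])) => //.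
    move=> n; have pe : 0 < (n.+1%:R : R)^-1 by rewrite invr_gt0 ltr0Sn.
    have [e Le he] := sup_adherent pe supL.
    apply/le_anti; rewrite mP_ge0 // andbT -Le.
    apply: mP_le => // x; rewrite /= !in_itv /= => xt; exact: lt_trans xt he.
  move=> x; rewrite /= in_itv /= => xc.
  have [n Hn] : exists n : nat, (n.+1%:R)^-1 < c - x by apply: arch_inv; rewrite subr_gt0.
  exists n => //=; rewrite in_itv /=; move: Hn; set e := (n.+1%:R)^-1; lra.
have right0 : mP mu [set` `]c, +oo[] = 0.
  apply: (@null_union mu _ (fun n => [set` `]c + (n.+1%:R)^-1, +oo[])) => //.
    move=> n; set e := (n.+1%:R : R)^-1.
    have e0 : 0 < e by rewrite invr_gt0 ltr0Sn.
    have h0 : c + e / 2 < c + e by lra.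
    have [h|//] := split_zero HP h0.
    have : L (c + e / 2) by exact: h.
    move/(sup_upper_bound supL); rewrite -/c => ?; lra.
  move=> x; rewrite /= in_itv /= andbT => xc.
  have [n Hn] : exists n : nat, (n.+1%:R)^-1 < x - c by apply: arch_inv; rewrite subr_gt0.
  exists n => //=; rewrite in_itv /= andbT; move: Hn; set e := (n.+1%:R)^-1; lra.
exists c; apply/le_anti; rewrite mP_le1 ?measurable_set1 //=.
have mc := measurable_set1 c.
have h1 : mP mu setT <= mP mu ([set` `]-oo, c[] `|` ([set c] `|` [set` `]c, +oo[])).
  apply: mP_le => //; first by apply: measurableU => //; exact: measurableU.
  move=> x _; case: (ltgtP x c) => xc.
  - by left; rewrite /= in_itv.
  - by right; right; rewrite /= in_itv /= xc.
  - by right; left.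
have mU : measurable ([set c] `|` [set` `]c, +oo[]) by exact: measurableU.
have h2 := mP_U mu (mI `]-oo, c[) mU.
have h3 := mP_U mu mc (mI `]c, +oo[).
rewrite T0 left0 right0 in h1 h2 h3; lra.
Qed.

End Push.
Section Final.
Variable R : realType.

Definition dP (x : R) : PR R := \d_x.

Lemma mP_dP x y : mP (dP x) [set y] = (x \in [set y])%:R.
Proof. have h := congr1 fine (@diracE _ R R x [set y]); exact: h. Qed.

Lemma mP_dP_same x : mP (dP x) [set x] = 1.
Proof. by rewrite mP_dP mem_set. Qed.

Lemma mP_dP_eq x y : mP (dP x) [set y] = 1 -> x = y.
Proof.
rewrite mP_dP; case: (boolP (x \in [set y])) => [/set_mem //|_].
by move=> /eqP; rewrite eq_sym oner_eq0.
Qed.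

End Final.

Theorem lemma3p2 (R : realType) (phi : PR R -> PR R)
  (phi_surj : forall nu : PR R, exists mu : PR R, phi mu = nu)
  (phi_iso : forall mu nu : PR R, kuiper (phi mu) (phi nu) = kuiper mu nu) :
  exists f : R -> R, bijective f /\
    forall (mu : PR R) (x : R), phi mu [set f x] = mu [set x].
Proof.
have Pto mu : Pprop mu -> Pprop (phi mu).
  move=> HP nu' rho'; have [nu <-] := phi_surj nu'; have [rho <-] := phi_surj rho'.
  rewrite !phi_iso; exact: HP.
have Pfrom mu : Pprop (phi mu) -> Pprop mu.
  by move=> HP nu rho h1 h2; rewrite -phi_iso; apply: HP; rewrite phi_iso.
have HD x : exists c, mP (phi (dP x)) [set c] = 1.
  by apply: P_D; apply: Pto; apply: dirac_P; exact: mP_dP_same.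
pose f x := proj1_sig (cid (HD x)).
have Hf x : mP (phi (dP x)) [set f x] = 1 := proj2_sig (cid (HD x)).
have form mu x : mP (phi mu) [set f x] = mP mu [set x].
  have := K_dirac (phi mu) (Hf x); rewrite phi_iso (K_dirac mu (mP_dP_same x)).
  by move=> ?; lra.
exists f; split; last first.
  by move=> mu x; rewrite !mPE ?measurable_set1 // form.
rewrite -setTT_bijective; split.
- by [].
- move=> x y _ _ fxy; apply/esym; apply: (@mP_dP_eq _ y x).
  by rewrite -form fxy Hf.
- move=> y _; have [mu hmu] := phi_surj (dP y).
  have : Pprop mu by apply: Pfrom; rewrite hmu; apply: dirac_P; exact: mP_dP_same.
  move=> /P_D [c hc]; exists c => //.
  by apply/esym; apply: mP_dP_eq; rewrite -hmu form.
Qed.
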